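(* (Operator Hornich-Hlawka inequality.) Let $A,B,C,X$ be $N\times N$ real symmetric positive semidefinite matrices and $p\geq1$ an integer. Then, in the Löwner order on symmetric operators on $(\mathbb{R}^{N})^{\otimes p}$, \[ \otimes^{p}(A+X)+\otimes^{p}(B+X)+\otimes^{p}(C+X)+\otimes^{p}(A+B+C+X)\geq\otimes^{p}(A+B+X)+\otimes^{p}(B+C+X)+\otimes^{p}(C+A+X)+\otimes^{p}X, \] where $\otimes^{p}Y=Y\otimes\cdots\otimes Y$ ($p$ factors, Kronecker/tensor product).
   Context: The Löwner order: $S\leq T$ iff $T-S$ is positive semidefinite. *)

(* Defs.v *)
From HB Require Import structures.
From mathcomp Require Import all_boot all_order all_algebra.
From mathcomp Require Import mxtens.
Set Implicit Arguments.
Unset Strict Implicit.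
Unset Printing Implicit Defensive.
Import Order.TTheory GRing.Theory Num.Theory.
Local Open Scope ring_scope.

Definition psdmx (R : realFieldType) (n : nat) (A : 'M[R]_n) : Prop :=
  A^T = A /\ forall v : 'cV[R]_n, 0 <= (v^T *m A *m v) 0 0.

Definition lowner_le (R : realFieldType) (n : nat) (S T : 'M[R]_n) : Prop :=
  psdmx (T - S).

(* Main.v *)
Require Import Defs.
From HB Require Import structures.
From mathcomp Require Import all_boot all_order all_algebra.
From mathcomp Require Import mxtens.
From mathcomp Require Import ring lra zify.
Set Implicit Arguments.
Unset Strict Implicit.
Unset Printing Implicit Defensive.
Import Order.TTheory GRing.Theory Num.Theory.
Local Open Scope ring_scope.

Inductive gram (R : realFieldType) (n : nat) : 'M[R]_n -> Prop :=
| gram0 : gram 0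
| gramS (d : R) (r : nat) (u : 'M[R]_(n, r)) (M : 'M[R]_n) :
    0 <= d -> gram M -> gram (d *: (u *m u^T) + M).

Definition bf (R : realFieldType) n (N : 'M[R]_n) (x y : 'cV[R]_n) : R :=
  (x^T *m N *m y) 0 0.

Lemma bfDl (R : realFieldType) n (N : 'M[R]_n) x1 x2 y :
  bf N (x1 + x2) y = bf N x1 y + bf N x2 y.
Proof. by rewrite /bf linearD /= !mulmxDl mxE. Qed.

Lemma bfDr (R : realFieldType) n (N : 'M[R]_n) x y1 y2 :
  bf N x (y1 + y2) = bf N x y1 + bf N x y2.
Proof. by rewrite /bf mulmxDr mxE. Qed.

Lemma bfZl (R : realFieldType) n (N : 'M[R]_n) (t : R) x y :
  bf N (t *: x) y = t * bf N x y.
Proof. by rewrite /bf linearZ /= -!scalemxAl mxE. Qed.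

Lemma bfZr (R : realFieldType) n (N : 'M[R]_n) (t : R) x y :
  bf N x (t *: y) = t * bf N x y.
Proof. by rewrite /bf -!scalemxAr mxE. Qed.

Lemma bfDm (R : realFieldType) n (N M : 'M[R]_n) x y :
  bf (N + M) x y = bf N x y + bf M x y.
Proof. by rewrite /bf mulmxDr mulmxDl mxE. Qed.

Lemma bfBm (R : realFieldType) n (N M : 'M[R]_n) x y :
  bf (N - M) x y = bf N x y - bf M x y.
Proof. by rewrite /bf mulmxBr mulmxBl !mxE. Qed.

Lemma bfZm (R : realFieldType) n (N : 'M[R]_n) (t : R) x y :
  bf (t *: N) x y = t * bf N x y.
Proof. by rewrite /bf -scalemxAr -scalemxAl mxE. Qed.

Lemma bf_delta (R : realFieldType) n (N : 'M[R]_n) a b :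
  bf N (delta_mx a 0) (delta_mx b 0) = N a b.
Proof. by rewrite /bf trmx_delta -rowE -colE !mxE. Qed.

Lemma bf_sym (R : realFieldType) n (N : 'M[R]_n) x y :
  N^T = N -> bf N x y = bf N y x.
Proof.
move=> Ns; rewrite /bf.
have -> : y^T *m N *m x = (x^T *m N *m y)^T by rewrite !trmx_mul trmxK Ns mulmxA.
by rewrite [in RHS]mxE.
Qed.

Lemma bf_rank1 (R : realFieldType) n r (u : 'M[R]_(n, r)) v :
  0 <= bf (u *m u^T) v v.
Proof.
rewrite /bf !mulmxA -(mulmxA _ u^T).
have -> : u^T *m v = (v^T *m u)^T by rewrite trmx_mul trmxK.
rewrite mxE; apply: sumr_ge0 => k _; rewrite [X in _ * X]mxE -expr2; exact: sqr_ge0.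
Qed.

Lemma gram_psd (R : realFieldType) n (M : 'M[R]_n) : gram M -> psdmx M.
Proof.
elim=> [|d r u M' d0 _ [Ms Mp]].
  by split; [rewrite trmx0 | move=> v; rewrite mulmx0 mul0mx mxE].
split; first by rewrite linearD /= linearZ /= trmx_mul trmxK Ms.
move=> v; have := Mp v; rewrite -/(bf _ v v) => h.
rewrite -/(bf _ v v) bfDm bfZm; apply: addr_ge0 => //.
by apply: mulr_ge0 => //; apply: bf_rank1.
Qed.

Lemma psd_gram (R : realFieldType) n (N : 'M[R]_n) : psdmx N -> gram N.
Proof.
move=> PN.
suff H : forall k (N : 'M[R]_n), psdmx N ->
    (forall i j : 'I_n, (k <= i)%N -> N i j = 0) -> gram N.
  by apply: (H n) => // i j; rewrite leqNgt ltn_ord.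
clear N PN.
elim=> [|k IH] N [Ns Np] Hz.
  have -> : N = 0 by apply/matrixP=> i j; rewrite mxE Hz.
  exact: gram0.
have Np' : forall v, 0 <= bf N v v := Np.
have sym : forall a b, N a b = N b a by move=> a b; rewrite -[in RHS]Ns mxE.
case: (ltnP k n) => [kn|nk]; last first.
  apply: IH => // i j ki; apply: Hz.
  by have := ltn_ord i; lia.
set j := Ordinal kn.
set e : 'cV[R]_n := delta_mx j 0.
have Njj : 0 <= N j j by have := Np' e; rewrite bf_delta.
move: Njj; rewrite le_eqVlt => /orP[/eqP a0|apos].
  have rowj : forall l, N j l = 0.
    move=> l; set b := N j l; have [//|bn0] := eqVneq b 0; exfalso.
    set c := N l l.
    pose t := - (c + 1) / (2 * b).
    have := Np' (t *: e + delta_mx l 0).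
    rewrite !bfDl !bfDr !bfZl !bfZr !bf_delta -a0 -(sym j l) -/b -/c.
    have -> : t * b = - (c + 1) / 2.
      by rewrite /t; field.
    rewrite mulr0 mulr0 add0r.
    have -> : - (c + 1) / 2 + (- (c + 1) / 2 + c) = -1 :> R by field.
    by rewrite oppr_ge0 ler10.
  apply: IH => //.
  move=> i l; rewrite leq_eqVlt => /orP[/eqP ki|ki]; last exact: Hz.
  have -> : i = j by apply: val_inj.
  exact: rowj.
set a := N j j.
set c := col j N.
set N' := N - a^-1 *: (c *m c^T).
have -> : N = a^-1 *: (c *m c^T) + N' by rewrite /N' addrC subrK.
apply: gramS; first by rewrite invr_ge0 ltW.
have ent : forall i l, N' i l = N i l - a^-1 * (N i j * N l j).
  by move=> i l; rewrite /N' !mxE big_ord1 !mxE.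
apply: IH.
- split.
    by rewrite /N' linearB /= linearZ /= trmx_mul trmxK Ns.
  move=> v.
  have -> : (v^T *m N' *m v) 0 0 = bf N' v v by [].
  set s := bf N v e.
  have h1 : bf N e v = s by rewrite /s bf_sym.
  have h2 : bf (c *m c^T) v v = s * s.
    rewrite /bf !mulmxA -(mulmxA _ c^T).
    have -> : c^T *m v = (v^T *m c)^T by rewrite trmx_mul trmxK.
    rewrite [LHS]mxE big_ord1 [X in _ * X]mxE.
    have -> : (v^T *m c) 0 0 = s by rewrite /s /bf /c colE mulmxA.
    by [].
  have := Np' (v + (- (s / a)) *: e).
  rewrite /N' bfBm bfZm h2 !bfDl !bfDr !bfZl !bfZr h1 -/s /e bf_delta -/a.
  have an0 : a != 0 by rewrite gt_eqF.
  have -> : - (s / a) * s = - (a^-1 * (s * s)) by field.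
  have -> : - (s / a) * (- (s / a) * a) = a^-1 * (s * s) by field.
  by rewrite addNr addr0.
- move=> i l; rewrite leq_eqVlt => /orP[/eqP ki|ki]; rewrite ent.
    have -> : i = j by apply: val_inj.
    rewrite -/a mulrA mulVf ?gt_eqF // mul1r sym subrr //.
  by rewrite (Hz i l ki) (Hz i j ki) mul0r mulr0 subr0.
Qed.

Lemma gram_eq (R : realFieldType) n (M N : 'M[R]_n) : M = N -> gram N -> gram M.
Proof. by move=> ->. Qed.

Lemma gram_add (R : realFieldType) n (M N : 'M[R]_n) :
  gram M -> gram N -> gram (M + N).
Proof.
elim=> [|d r u M' d0 _ IH] GN; first by rewrite add0r.
by rewrite -addrA; apply: gramS => //; apply: IH.
Qed.

Lemma tensDl (R : realFieldType) m n p q (M1 M2 : 'M[R]_(m,n)) (N : 'M[R]_(p,q)) :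
  (M1 + M2) *t N = M1 *t N + M2 *t N.
Proof. by apply/matrixP=> i j; rewrite /tensmx !mxE mulrDl. Qed.

Lemma tensDr (R : realFieldType) m n p q (M : 'M[R]_(m,n)) (N1 N2 : 'M[R]_(p,q)) :
  M *t (N1 + N2) = M *t N1 + M *t N2.
Proof. by apply/matrixP=> i j; rewrite /tensmx !mxE mulrDr. Qed.

Lemma tensZl (R : realFieldType) m n p q (d : R) (M : 'M[R]_(m,n)) (N : 'M[R]_(p,q)) :
  (d *: M) *t N = d *: (M *t N).
Proof. by apply/matrixP=> i j; rewrite /tensmx !mxE mulrA. Qed.

Lemma tensZr (R : realFieldType) m n p q (d : R) (M : 'M[R]_(m,n)) (N : 'M[R]_(p,q)) :
  M *t (d *: N) = d *: (M *t N).
Proof. by apply/matrixP=> i j; rewrite /tensmx !mxE mulrCA. Qed.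

Lemma gram_tens (R : realFieldType) m n (M : 'M[R]_m) (N : 'M[R]_n) :
  gram M -> gram N -> gram (M *t N).
Proof.
elim=> [|d r u M' d0 _ IHM] GN; first by rewrite tens0mx; exact: gram0.
rewrite tensDl; apply: gram_add; last exact: IHM.
rewrite tensZl.
elim: GN => [|e r' w N' e0 _ IHN]; first by rewrite tensmx0 scaler0; exact: gram0.
rewrite tensDr scalerDr; apply: gram_add; last exact: IHN.
rewrite tensZr scalerA -tensmx_mul -trmx_tens -[_ *: _]addr0.
by apply: gramS; [apply: mulr_ge0 | apply: gram0].
Qed.

Lemma main_ind (R : realFieldType) n k :
 (forall X : 'M[R]_n, gram X -> gram (X ^t k.+1)) /\
 (forall X A : 'M[R]_n, gram X -> gram A -> gram ((A + X) ^t k.+1 - X ^t k.+1)) /\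
 (forall X A B : 'M[R]_n, gram X -> gram A -> gram B ->
    gram ((A + B + X) ^t k.+1 - (A + X) ^t k.+1 - (B + X) ^t k.+1 + X ^t k.+1)) /\
 (forall X A B C : 'M[R]_n, gram X -> gram A -> gram B -> gram C ->
    gram (((A + X) ^t k.+1 + (B + X) ^t k.+1 + (C + X) ^t k.+1 + (A + B + C + X) ^t k.+1)
     - ((A + B + X) ^t k.+1 + (B + C + X) ^t k.+1 + (C + A + X) ^t k.+1 + X ^t k.+1))).
Proof.
elim: k => [|k [IH0 [IH1 [IH2 IH3]]]].
  split; first by move=> X GX; rewrite ntensmx1.
  split; first by move=> X A _ GA; rewrite !ntensmx1 addrK.
  split.
    move=> X A B _ _ _; rewrite !ntensmx1; apply: (gram_eq _ (gram0 _ _)).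
    by apply/matrixP=> i j; rewrite !mxE; ring.
  move=> X A B C _ _ _ _; rewrite !ntensmx1; apply: (gram_eq _ (gram0 _ _)).
  by apply/matrixP=> i j; rewrite !mxE; ring.
split; first by move=> X GX; rewrite ntensmxSS; apply: gram_tens => //; apply: IH0.
split.
  move=> X A GX GA; rewrite !ntensmxSS.
  apply: (gram_eq _ (gram_add (gram_tens GX (IH1 X A GX GA))
                              (gram_tens GA (gram_add (IH1 X A GX GA) (IH0 X GX))))).
  by apply/matrixP=> i j; rewrite /tensmx !mxE; ring.
split.
  move=> X A B GX GA GB; rewrite !ntensmxSS.
  apply: (gram_eq _ (gram_add (gram_add (gram_tens GX (IH2 X A B GX GA GB))
                              (gram_tens GA (gram_add (IH2 X A B GX GA GB) (IH1 X B GX GB))))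
                              (gram_tens GB (gram_add (IH2 X A B GX GA GB) (IH1 X A GX GA))))).
  by apply/matrixP=> i j; rewrite /tensmx !mxE; ring.
move=> X A B C GX GA GB GC; rewrite !ntensmxSS.
have G3 := IH3 X A B C GX GA GB GC.
apply: (gram_eq _ (gram_add (gram_add (gram_add (gram_tens GX G3)
                              (gram_tens GA (gram_add G3 (IH2 X B C GX GB GC))))
                              (gram_tens GB (gram_add G3 (IH2 X C A GX GC GA))))
                              (gram_tens GC (gram_add G3 (IH2 X A B GX GA GB))))).
by apply/matrixP=> i j; rewrite /tensmx !mxE; ring.
Qed.

Theorem theorem5p8 (R : realFieldType) (N p : nat) (A B C X : 'M[R]_N) :
  psdmx A -> psdmx B -> psdmx C -> psdmx X -> (1 <= p)%N ->
  lowner_le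
    ((A + B + X) ^t p + (B + C + X) ^t p + (C + A + X) ^t p + X ^t p)
    ((A + X) ^t p + (B + X) ^t p + (C + X) ^t p + (A + B + C + X) ^t p).
Proof.
move=> /psd_gram GA /psd_gram GB /psd_gram GC /psd_gram GX.
case: p => [//|k] _.
rewrite /lowner_le; apply: gram_psd.
by have [_ [_ [_ H]]] := main_ind R N k; apply: H.
Qed.
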